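(* Let $v$ satisfy the standing assumptions and the doubling condition, with constant $D$. Let $\{n_k\}_{k\ge1}$ be a sequence of positive integers with $n_{k+1}\ge\lambda n_k$ for all $k$, where $\lambda>1$, and let $u(z)=\operatorname{Re}\sum_k a_{n_k}z^{n_k}$, $a_{n_k}\in\mathbb{C}$, where the series converges in $\mathbb{D}$. Then $u\in k^\infty_v$ if and only if there exists $\gamma>0$ such that $\sum_{n_k\le N}|a_{n_k}|\le\gamma\, g(N)$ for every $N\in\mathbb{N}$.
   Context: Standing assumptions: $v:[0,1)\to[1,\infty)$ is positive, increasing, continuous, $v(0)=1$, $\lim_{r\to1}v(r)=+\infty$; $g(x)=v(1-x^{-1})$ for $x\ge1$. Doubling condition: there is $D\ge1$ with $v(1-d)\le D\,v(1-2d)$ for all $d\in(0,1/2]$, equivalently $g(2x)\le D g(x)$ for $x\ge1$. $k^\infty_v$ is the set of real harmonic functions $u$ on the unit disk $\mathbb{D}$ for which there is $K>0$ with $u(z)\le K v(|z|)$ for all $z\in\mathbb{D}$. *)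

(* Defs.v *)
From Stdlib Require Import Reals Lra Lia.
Open Scope R_scope.

(* Standing assumptions on v : [0,1) -> [1, +oo). v is a total function R -> R,
   only its values on [0,1) matter. *)
Definition standing (v : R -> R) : Prop :=
  (forall r, 0 <= r < 1 -> 1 <= v r) /\
  (forall r s, 0 <= r -> r < s -> s < 1 -> v r < v s) /\
  (forall r, 0 <= r < 1 -> forall eps, eps > 0 -> exists delta, delta > 0 /\
      forall s, 0 <= s < 1 -> Rabs (s - r) < delta -> Rabs (v s - v r) < eps) /\
  v 0 = 1 /\
  (forall M, exists delta, delta > 0 /\ forall r, 1 - delta < r < 1 -> M < v r).

Definition g (v : R -> R) (x : R) : R := v (1 - / x).

Definition doubling (v : R -> R) (D : R) : Prop :=
  1 <= D /\ forall d, 0 < d <= / 2 -> v (1 - d) <= D * v (1 - 2 * d).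

(* Complex coefficients a_{n_k} = ar k + i ai k; z = r e^{i theta}.
   Re (a z^m) = r^m (ar cos(m theta) - ai sin(m theta)),
   Im (a z^m) = r^m (ar sin(m theta) + ai cos(m theta)). *)
Definition re_term (n : nat -> nat) (ar ai : nat -> R) (r th : R) (k : nat) : R :=
  r ^ (n k) * (ar k * cos (INR (n k) * th) - ai k * sin (INR (n k) * th)).
Definition im_term (n : nat -> nat) (ar ai : nat -> R) (r th : R) (k : nat) : R :=
  r ^ (n k) * (ar k * sin (INR (n k) * th) + ai k * cos (INR (n k) * th)).

Definition converges_in_disk (n : nat -> nat) (ar ai : nat -> R) : Prop :=
  forall r th, 0 <= r < 1 ->
    (exists l, Un_cv (fun N => sum_f_R0 (re_term n ar ai r th) N) l) /\
    (exists l, Un_cv (fun N => sum_f_R0 (im_term n ar ai r th) N) l).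

Definition u_value (n : nat -> nat) (ar ai : nat -> R) (r th l : R) : Prop :=
  Un_cv (fun N => sum_f_R0 (re_term n ar ai r th) N) l.

(* u in k^infty_v : exists K > 0, u(z) <= K v(|z|) on the disk
   (u is harmonic, being the real part of a convergent power series). *)
Definition in_kv (v : R -> R) (n : nat -> nat) (ar ai : nat -> R) : Prop :=
  exists K, K > 0 /\ forall r th l, 0 <= r < 1 -> u_value n ar ai r th l -> l <= K * v r.

Definition cmod (x y : R) : R := sqrt (x * x + y * y).

(* sum_{n_k <= N} |a_{n_k}|; since n is strictly increasing with n_0 >= 1,
   every k with n_k <= N satisfies k <= N. *)
Definition coef_sum (n : nat -> nat) (ar ai : nat -> R) (N : nat) : R :=
  sum_f_R0 (fun k => if Nat.leb (n k) N then cmod (ar k) (ai k) else 0) N.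

(* Main.v *)
Require Import Defs.
From Stdlib Require Import Reals Lra Lia ZArith List.
Open Scope R_scope.


Fixpoint sm (f : nat -> R) (n : nat) : R :=
  match n with O => 0 | S n' => sm f n' + f n' end.

Lemma sm_ext f g n : (forall j, (j < n)%nat -> f j = g j) -> sm f n = sm g n.
Proof. induction n; simpl; intros; auto. rewrite IHn, H; auto. Qed.
Lemma sm_plus f g n : sm (fun j => f j + g j) n = sm f n + sm g n.
Proof. induction n; simpl; [lra|rewrite IHn; lra]. Qed.
Lemma sm_scal c f n : sm (fun j => c * f j) n = c * sm f n.
Proof. induction n; simpl; [lra|rewrite IHn; lra]. Qed.
Lemma sm_const c n : sm (fun _ => c) n = INR n * c.
Proof. induction n; simpl sm; [simpl; lra|rewrite IHn, S_INR; lra]. Qed.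
Lemma sm_le f g n : (forall j, (j < n)%nat -> f j <= g j) -> sm f n <= sm g n.
Proof. induction n; simpl; intros; [lra|]. assert (f n <= g n) by auto. assert (sm f n <= sm g n) by auto. lra. Qed.
Lemma sm_zero f n : (forall j, (j < n)%nat -> f j = 0) -> sm f n = 0.
Proof. intros. rewrite (sm_ext f (fun _ => 0)); auto. rewrite sm_const; lra. Qed.
Lemma sm_swap (f : nat -> nat -> R) n m :
  sm (fun i => sm (fun j => f i j) m) n = sm (fun j => sm (fun i => f i j) n) m.
Proof.
  induction n; simpl. symmetry; apply sm_zero; auto.
  rewrite IHn. rewrite <- sm_plus. reflexivity.
Qed.
Lemma sm_telescope (h : nat -> R) n : sm (fun j => h (S j) - h j) n = h n - h O.
Proof. induction n; simpl; [lra|rewrite IHn; lra]. Qed.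

Definition th (M j : nat) : R := 2 * PI * INR j / INR M.

Lemma sin_half_nz (M m : nat) : (0 < m < M)%nat -> sin (PI * INR m / INR M) <> 0.
Proof.
  intros Hm. assert (0 < INR m) by (apply lt_0_INR; lia).
  assert (INR m < INR M) by (apply lt_INR; lia).
  assert (0 < INR M) by lra.
  apply Rgt_not_eq. apply sin_gt_0.
  - apply Rdiv_lt_0_compat; [apply Rmult_lt_0_compat; [apply PI_RGT_0|lra]|lra].
  - apply Rmult_lt_reg_r with (INR M); auto. unfold Rdiv. rewrite Rmult_assoc, Rinv_l by lra.
    rewrite Rmult_1_r. apply Rmult_lt_compat_l; [apply PI_RGT_0|lra].
Qed.

Lemma ortho_nat (M m : nat) : (0 < m < M)%nat ->
  sm (fun j => cos (INR m * th M j)) M = 0 /\ sm (fun j => sin (INR m * th M j)) M = 0.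
Proof.
  intros Hm. set (x := 2 * PI * INR m / INR M).
  assert (HMp : 0 < INR M) by (apply lt_0_INR; lia).
  assert (Hx : forall j, INR m * th M j = INR j * x).
  { intro j; unfold th, x; field; lra. }
  assert (Hs : sin (x/2) <> 0).
  { replace (x/2) with (PI * INR m / INR M) by (unfold x; field; lra). apply sin_half_nz; auto. }
  assert (HMx : INR M * x = 2 * INR m * PI) by (unfold x; field; lra).
  split.
  - apply Rmult_eq_reg_l with (2 * sin (x/2)); [|lra].
    rewrite Rmult_0_r, <- sm_scal.
    rewrite (sm_ext _ (fun j => sin (INR (S j) * x - x/2) - sin (INR j * x - x/2))).
    + rewrite (sm_telescope (fun j => sin (INR j * x - x/2))). simpl INR at 2. rewrite Rmult_0_l.
      replace (INR M * x - x/2) with (- (x/2) + 2 * INR m * PI) by lra.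
      rewrite sin_period. replace (0 - x/2) with (-(x/2)) by lra. lra.
    + intros j _. rewrite Hx, S_INR.
      replace ((INR j + 1) * x - x/2) with (INR j * x + x/2) by lra.
      rewrite sin_plus, sin_minus. ring.
  - apply Rmult_eq_reg_l with (2 * sin (x/2)); [|lra].
    rewrite Rmult_0_r, <- sm_scal.
    rewrite (sm_ext _ (fun j => - (cos (INR (S j) * x - x/2) - cos (INR j * x - x/2)))).
    + rewrite (sm_ext (fun j => - _) (fun j => -1 * (cos (INR (S j) * x - x/2) - cos (INR j * x - x/2)))) by (intros; ring).
      rewrite sm_scal, (sm_telescope (fun j => cos (INR j * x - x/2))). simpl INR at 2. rewrite Rmult_0_l.
      replace (INR M * x - x/2) with (- (x/2) + 2 * INR m * PI) by lra.
      rewrite cos_period. replace (0 - x/2) with (-(x/2)) by lra. lra.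
    + intros j _. rewrite Hx, S_INR.
      replace ((INR j + 1) * x - x/2) with (INR j * x + x/2) by lra.
      rewrite cos_plus, cos_minus. ring.
Qed.

Definition T (m : Z) (a b : R) (t : R) : R := a * cos (IZR m * t) - b * sin (IZR m * t).

Lemma T_prod m p a b c d t :
  T m a b t * T p c d t =
  / 2 * T (m + p) (a*c - b*d) (a*d + b*c) t + / 2 * T (m - p) (a*c + b*d) (b*c - a*d) t.
Proof.
  unfold T. rewrite plus_IZR, minus_IZR.
  replace ((IZR m + IZR p) * t) with (IZR m * t + IZR p * t) by ring.
  replace ((IZR m - IZR p) * t) with (IZR m * t - IZR p * t) by ring.
  rewrite cos_minus, sin_minus, cos_plus, sin_plus. field.
Qed.

Lemma T_zero a b t : T 0 a b t = a.
Proof. unfold T. rewrite Rmult_0_l, cos_0, sin_0. ring. Qed.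

Lemma ortho_Z (M : nat) (m : Z) : (0 < Z.abs m)%Z -> (Z.abs m < Z.of_nat M)%Z ->
  sm (fun j => cos (IZR m * th M j)) M = 0 /\ sm (fun j => sin (IZR m * th M j)) M = 0.
Proof.
  intros H1 H2. destruct (Z_lt_le_dec m 0) as [Hn|Hp].
  - destruct (ortho_nat M (Z.to_nat (- m))) as [Hc Hs]; [lia|].
    assert (E : forall j, IZR m * th M j = - (INR (Z.to_nat (- m)) * th M j)).
    { intro j. rewrite INR_IZR_INZ, Z2Nat.id by lia. rewrite opp_IZR. ring. }
    split.
    + rewrite <- Hc. apply sm_ext; intros. rewrite E, cos_neg; auto.
    + rewrite (sm_ext _ (fun j => -1 * sin (INR (Z.to_nat (- m)) * th M j))).
      * rewrite sm_scal, Hs; ring.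
      * intros. rewrite E, sin_neg; ring.
  - destruct (ortho_nat M (Z.to_nat m)) as [Hc Hs]; [lia|].
    assert (E : forall j, IZR m * th M j = INR (Z.to_nat m) * th M j).
    { intro j. rewrite INR_IZR_INZ, Z2Nat.id by lia. auto. }
    split; [rewrite <- Hc|rewrite <- Hs]; apply sm_ext; intros; rewrite E; auto.
Qed.

Lemma ortho_T (M : nat) (m : Z) a b : (0 < Z.abs m)%Z -> (Z.abs m < Z.of_nat M)%Z ->
  sm (fun j => T m a b (th M j)) M = 0.
Proof.
  intros H1 H2. destruct (ortho_Z M m H1 H2) as [Hc Hs]. unfold T.
  rewrite (sm_ext _ (fun j => a * cos (IZR m * th M j) + (- b) * sin (IZR m * th M j))) by (intros; ring).
  rewrite sm_plus, !sm_scal, Hc, Hs. ring.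
Qed.


Definition rho (ar ai : nat -> R) k := cmod (ar k) (ai k).
Definition ck (n : nat -> nat) (ar ai : nat -> R) k t :=
  T (Z.of_nat (n k)) (ar k / rho ar ai k) (ai k / rho ar ai k) t.
Fixpoint PF n ar ai (F : list nat) t : R :=
  match F with nil => 1 | k :: F' => (1 + ck n ar ai k t) * PF n ar ai F' t end.
Fixpoint Bn (n : nat -> nat) (F : list nat) : nat :=
  match F with nil => O | k :: F' => (n k + Bn n F')%nat end.
Fixpoint Spec (n : nat -> nat) (F : list nat) (s : Z) : Prop :=
  match F with nil => s = 0%Z
  | k :: F' => Spec n F' s \/ Spec n F' (s - Z.of_nat (n k))%Z \/ Spec n F' (s + Z.of_nat (n k))%Z end.
Fixpoint Lac (n : nat -> nat) (Q : R) (F : list nat) : Prop :=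
  match F with nil => True
  | k :: F' => Lac n Q F' /\ (Q - 1) * INR (Bn n F') <= INR (n k) end.
Definition G (M : nat) (f : R -> R) := sm (fun j => f (th M j)) M.

Lemma G_ext M f g : (forall t, f t = g t) -> G M f = G M g.
Proof. intros; unfold G; apply sm_ext; auto. Qed.

Lemma G_step n ar ai k F M m a b :
  let c := ar k / rho ar ai k in let d := ai k / rho ar ai k in
  G M (fun t => PF n ar ai (k :: F) t * T m a b t) =
  G M (fun t => PF n ar ai F t * T m a b t)
  + / 2 * G M (fun t => PF n ar ai F t * T (m + Z.of_nat (n k)) (a*c - b*d) (a*d + b*c) t)
  + / 2 * G M (fun t => PF n ar ai F t * T (m - Z.of_nat (n k)) (a*c + b*d) (b*c - a*d) t).
Proof.
  intros c d. unfold G. rewrite <- !sm_scal, <- !sm_plus. apply sm_ext; intros j _.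
  simpl PF. unfold ck. fold c d.
  transitivity (PF n ar ai F (th M j) * T m a b (th M j) + PF n ar ai F (th M j) * (T m a b (th M j) * T (Z.of_nat (n k)) c d (th M j))); [ring|].
  rewrite T_prod. ring.
Qed.

Lemma R1 n ar ai M F : forall m a b,
  (Z.abs m + Z.of_nat (Bn n F) < Z.of_nat M)%Z -> ~ Spec n F m ->
  G M (fun t => PF n ar ai F t * T m a b t) = 0.
Proof.
  induction F as [|k F IH]; intros m a b Hm Hs.
  - simpl in Hs. rewrite (G_ext _ _ (fun t => T m a b t)) by (intros; simpl; ring).
    apply ortho_T; simpl in Hm; lia.
  - rewrite G_step. simpl in Hm, Hs.
    rewrite !IH; try lia.
    + ring.
    + intro H; apply Hs; right; left. auto.
    + intro H; apply Hs; right; right. auto.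
    + tauto.
Qed.

Lemma SpecB n F s : Spec n F s -> (Z.abs s <= Z.of_nat (Bn n F))%Z.
Proof.
  revert s; induction F as [|k F IH]; simpl; intros s H.
  - subst; simpl; lia.
  - destruct H as [H|[H|H]]; apply IH in H; lia.
Qed.

Lemma In_Bn n F k : In k F -> (n k <= Bn n F)%nat.
Proof. induction F; simpl; intros H; [contradiction|]. destruct H; [subst; lia|]. apply IHF in H; lia. Qed.

Lemma LacB n Q k F : Lac n Q (k :: F) -> 3 < Q -> (0 < n k)%nat -> (2 * Bn n F < n k)%nat.
Proof.
  simpl; intros [_ H] HQ Hk. apply INR_lt. rewrite !plus_INR. simpl (INR 0).
  assert (0 < INR (n k)) by (apply lt_0_INR; lia).
  assert (0 <= INR (Bn n F)) by apply pos_INR.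
  destruct (Req_dec (INR (Bn n F)) 0) as [E|E]; [rewrite E; lra|].
  assert (2 * INR (Bn n F) < (Q - 1) * INR (Bn n F)) by (apply Rmult_lt_compat_r; lra). lra.
Qed.

Lemma SpecI n Q F s : Lac n Q F -> 1 < Q -> Spec n F s -> s <> 0%Z ->
  exists i, In i F /\ (Q - 1) * Rabs (IZR (Z.abs s) - INR (n i)) <= INR (n i).
Proof.
  revert s; induction F as [|k F IH]; simpl; intros s HL HQ H Hs.
  - contradiction.
  - destruct HL as [HL HB].
    assert (Hk : forall s', Spec n F s' -> (Z.abs (Z.abs s - Z.of_nat (n k)) <= Z.abs s')%Z ->
      exists i, (k = i \/ In i F) /\ (Q - 1) * Rabs (IZR (Z.abs s) - INR (n i)) <= INR (n i)).
    { intros s' H1 H2. exists k; split; auto. apply SpecB in H1.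
      apply Rle_trans with ((Q - 1) * INR (Bn n F)); auto.
      apply Rmult_le_compat_l; [lra|].
      rewrite (INR_IZR_INZ (n k)), <- minus_IZR, <- abs_IZR.
      rewrite INR_IZR_INZ. apply IZR_le. lia. }
    destruct H as [H|[H|H]].
    + destruct (IH s HL HQ H Hs) as [i [Hi1 Hi2]]; exists i; auto.
    + apply (Hk _ H); lia.
    + apply (Hk _ H); lia.
Qed.

Lemma R2 n ar ai Q M F : Lac n Q F -> 3 < Q -> (forall k, (0 < n k)%nat) ->
  (Z.of_nat (Bn n F) < Z.of_nat M)%Z -> forall a b,
  G M (fun t => PF n ar ai F t * T 0 a b t) = INR M * a.
Proof.
  induction F as [|k F IH]; intros HL HQ Hn HM a b.
  - unfold G. rewrite (sm_ext _ (fun _ => a)) by (intros; simpl; rewrite T_zero; ring).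
    apply sm_const.
  - pose proof (LacB _ _ _ _ HL HQ (Hn k)) as HB. destruct HL as [HL _]. simpl in HM.
    rewrite G_step, IH by (auto; lia). rewrite !R1.
    + ring.
    + lia.
    + intro H; apply SpecB in H; lia.
    + lia.
    + intro H; apply SpecB in H; lia.
Qed.

Lemma R3 n ar ai Q M F : Lac n Q F -> 3 < Q -> (forall k, (0 < n k)%nat) ->
  forall k, In k F -> (Z.of_nat (n k + Bn n F) < Z.of_nat M)%Z -> forall a b,
  G M (fun t => PF n ar ai F t * T (Z.of_nat (n k)) a b t) =
  INR M / 2 * (a * (ar k / rho ar ai k) + b * (ai k / rho ar ai k)).
Proof.
  induction F as [|t F IH]; intros HL HQ Hn k Hk HM a b.
  - contradiction.
  - pose proof (LacB _ _ _ _ HL HQ (Hn t)) as HB. destruct HL as [HL _]. simpl in HM.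
    destruct (Nat.eq_dec k t) as [E|E].
    + subst t. rewrite G_step, Z.sub_diag, (R2 n ar ai Q), R1, R1; auto; try lia.
      * unfold Rdiv; ring.
      * intro HH; apply SpecB in HH; lia.
      * intro HH; apply SpecB in HH; lia.
    + destruct Hk as [Hk|Hk]; [congruence|].
      pose proof (In_Bn n F k Hk).
      rewrite G_step, IH, R1, R1; auto; try lia.
      * ring.
      * intro HH; apply SpecB in HH; lia.
      * intro HH; apply SpecB in HH; lia.
Qed.


Lemma rho_nonneg ar ai k : 0 <= rho ar ai k.
Proof. unfold rho, cmod; apply sqrt_pos. Qed.
Lemma rho_sq ar ai k : rho ar ai k * rho ar ai k = ar k * ar k + ai k * ai k.
Proof. unfold rho, cmod; apply sqrt_sqrt; nra. Qed.
Lemma rho_le ar ai k : rho ar ai k <= Rabs (ar k) + Rabs (ai k).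
Proof.
  unfold rho, cmod. rewrite <- sqrt_square by (pose proof (Rabs_pos (ar k)); pose proof (Rabs_pos (ai k)); lra).
  apply sqrt_le_1; [nra| |].
  - pose proof (Rabs_pos (ar k)); pose proof (Rabs_pos (ai k)); nra.
  - pose proof (Rabs_pos (ar k)); pose proof (Rabs_pos (ai k)).
    assert (ar k * ar k = Rabs (ar k) * Rabs (ar k)) by (rewrite <- Rabs_mult, Rabs_right; nra).
    assert (ai k * ai k = Rabs (ai k) * Rabs (ai k)) by (rewrite <- Rabs_mult, Rabs_right; nra).
    nra.
Qed.

Lemma rho0 ar ai k : rho ar ai k = 0 -> ar k = 0 /\ ai k = 0.
Proof. intro H. pose proof (rho_sq ar ai k). rewrite H in H0. split; nra. Qed.

Lemma cd_le1 ar ai k : (ar k / rho ar ai k) * (ar k / rho ar ai k) + (ai k / rho ar ai k) * (ai k / rho ar ai k) <= 1.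
Proof.
  destruct (Req_dec (rho ar ai k) 0) as [E|E].
  - destruct (rho0 _ _ _ E) as [E1 E2]. rewrite E1, E2. unfold Rdiv. lra.
  - pose proof (rho_sq ar ai k).
    replace (ar k / rho ar ai k * (ar k / rho ar ai k) + ai k / rho ar ai k * (ai k / rho ar ai k))
      with ((ar k * ar k + ai k * ai k) / (rho ar ai k * rho ar ai k)) by (field; auto).
    rewrite <- H. unfold Rdiv. rewrite Rinv_r; [lra|]. intro; apply E; nra.
Qed.

Lemma T_bound m c d t : c * c + d * d <= 1 -> -1 <= T m c d t <= 1.
Proof.
  intros H. unfold T. set (x := IZR m * t).
  pose proof (sin2_cos2 x). unfold Rsqr in H0.
  assert (E : (c * cos x - d * sin x) * (c * cos x - d * sin x) + (c * sin x + d * cos x) * (c * sin x + d * cos x)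
      = (c * c + d * d) * (sin x * sin x + cos x * cos x)) by ring.
  rewrite H0, Rmult_1_r in E.
  assert ((c * cos x - d * sin x) * (c * cos x - d * sin x) <= 1) by (pose proof (Rle_0_sqr (c * sin x + d * cos x)); unfold Rsqr in *; lra).
  split; nra.
Qed.

Lemma PF_nonneg n ar ai F t : 0 <= PF n ar ai F t.
Proof.
  induction F; simpl; [lra|]. apply Rmult_le_pos; auto.
  unfold ck. pose proof (T_bound (Z.of_nat (n a)) _ _ t (cd_le1 ar ai a)). lra.
Qed.

Lemma val_rho ar ai k x : (x * ar k) * (ar k / rho ar ai k) + (x * ai k) * (ai k / rho ar ai k) = x * rho ar ai k.
Proof.
  destruct (Req_dec (rho ar ai k) 0) as [E|E].
  - destruct (rho0 _ _ _ E) as [E1 E2]. rewrite E1, E2, E. unfold Rdiv. ring.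
  - pose proof (rho_sq ar ai k). transitivity (x * (ar k * ar k + ai k * ai k) / rho ar ai k); [field; auto|]. rewrite <- H. field; auto.
Qed.

Lemma re_T n ar ai r t k : re_term n ar ai r t k = T (Z.of_nat (n k)) (r ^ n k * ar k) (r ^ n k * ai k) t.
Proof. unfold re_term, T. rewrite <- INR_IZR_INZ. ring. Qed.

Lemma pow_decr q a b : 0 <= q <= 1 -> (a <= b)%nat -> q ^ b <= q ^ a.
Proof.
  intros Hq Hab. replace b with (a + (b - a))%nat by lia. rewrite pow_add.
  assert (q ^ (b - a) <= 1) by (rewrite <- (pow1 (b - a)); apply pow_incr; lra).
  pose proof (pow_le q a (proj1 Hq)). pose proof (pow_le q (b - a) (proj1 Hq)). nra.
Qed.

Lemma sum_sm f N : sum_f_R0 f N = sm f (S N).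
Proof. induction N; simpl; [lra|]. simpl in IHN. rewrite IHN. reflexivity. Qed.

Lemma sm_add f a p : sm f (a + p) = sm f a + sm (fun i => f (a + i)%nat) p.
Proof. induction p; simpl; [rewrite Nat.add_0_r; lra|]. rewrite Nat.add_succ_r. simpl. rewrite IHp. lra. Qed.

Lemma sm_abs f p : Rabs (sm f p) <= sm (fun i => Rabs (f i)) p.
Proof.
  induction p; simpl. rewrite Rabs_R0; lra.
  eapply Rle_trans; [apply Rabs_triang|]. lra.
Qed.

Lemma sm_nonneg f p : (forall i, 0 <= f i) -> 0 <= sm f p.
Proof. intros. induction p; simpl; [lra|]. pose proof (H p). lra. Qed.

Lemma sm_mono f a b : (forall i, 0 <= f i) -> (a <= b)%nat -> sm f a <= sm f b.
Proof.
  intros H Hab. replace b with (a + (b - a))%nat by lia. rewrite sm_add.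
  pose proof (sm_nonneg (fun i => f (a + i)%nat) (b - a) (fun i => H _)). lra.
Qed.

Lemma geom q a p : sm (fun i => q ^ (a + i)) p * (1 - q) = q ^ a - q ^ (a + p).
Proof.
  induction p; simpl. rewrite Nat.add_0_r; ring.
  rewrite Rmult_plus_distr_r, IHp. rewrite Nat.add_succ_r. simpl. ring.
Qed.

Lemma terms_small f l : Un_cv (fun N => sum_f_R0 f N) l -> exists N0, forall k, (k >= N0)%nat -> Rabs (f k) <= 1.
Proof.
  intros H. destruct (H (1/2)) as [N HN]; [lra|]. exists (S N). intros k Hk.
  destruct k; [lia|]. assert (E : f (S k) = sum_f_R0 f (S k) - sum_f_R0 f k) by (simpl; ring).
  rewrite E. pose proof (HN (S k) ltac:(lia)). pose proof (HN k ltac:(lia)). unfold Rdist in *.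
  replace (sum_f_R0 f (S k) - sum_f_R0 f k) with ((sum_f_R0 f (S k) - l) - (sum_f_R0 f k - l)) by ring.
  eapply Rle_trans; [apply Rabs_triang|]. rewrite Rabs_Ropp. lra.
Qed.

Lemma re_bound n ar ai r t k : 0 <= r -> Rabs (re_term n ar ai r t k) <= rho ar ai k * r ^ n k.
Proof.
  intros Hr. unfold re_term. rewrite Rabs_mult, (Rabs_right (r ^ n k)) by (apply Rle_ge, pow_le; auto).
  rewrite Rmult_comm. apply Rmult_le_compat_r; [apply pow_le; auto|].
  set (x := INR (n k) * t). set (y := ar k * cos x - ai k * sin x).
  pose proof (sin2_cos2 x). unfold Rsqr in H.
  assert (y * y <= rho ar ai k * rho ar ai k).
  { rewrite rho_sq. unfold y. pose proof (Rle_0_sqr (ar k * sin x + ai k * cos x)). unfold Rsqr in *. nra. }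
  pose proof (rho_nonneg ar ai k).
  destruct (Rle_dec (Rabs y) (rho ar ai k)); auto.
  exfalso. assert (Rabs y * Rabs y <= rho ar ai k * rho ar ai k) by (rewrite <- Rabs_mult, Rabs_right; nra).
  nra.
Qed.

Lemma limit_close f l k1 eps : Un_cv (fun N => sum_f_R0 f N) l ->
  (forall p, Rabs (sm (fun i => f (S k1 + i)%nat) p) <= eps) -> Rabs (l - sum_f_R0 f k1) <= eps.
Proof.
  intros Hl Hp. destruct (Rle_dec (Rabs (l - sum_f_R0 f k1)) eps) as [|Hn]; auto. exfalso.
  destruct (Hl (Rabs (l - sum_f_R0 f k1) - eps)) as [N HN]; [lra|].
  pose proof (HN (k1 + N)%nat ltac:(lia)). unfold Rdist in H.
  rewrite !sum_sm in *. rewrite <- Nat.add_succ_l in H. rewrite sm_add in H.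
  pose proof (Hp N).
  set (A := sm f (S k1) + sm (fun i => f (S k1 + i)%nat) N - l) in *.
  set (B := sm (fun i => f (S k1 + i)%nat) N) in *.
  replace (l - sm f (S k1)) with (B + - A) in Hn, H by (unfold A, B; ring).
  pose proof (Rabs_triang B (- A)). rewrite Rabs_Ropp in H1. lra.
Qed.

Lemma abs_tail n ar ai r eps : converges_in_disk n ar ai -> (forall k, (k <= n k)%nat) -> 0 <= r < 1 -> eps > 0 ->
  exists k0, forall k1, (k1 >= k0)%nat -> forall p,
    sm (fun i => rho ar ai (S k1 + i)%nat * r ^ n (S k1 + i)%nat) p <= eps.
Proof.
  intros Hc Hkn Hr He.
  set (r' := (1 + r) / 2). set (q := r / r').
  assert (Hr' : 0 < r' < 1) by (unfold r'; lra).
  assert (Hq : 0 <= q < 1).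
  { unfold q. split. apply Rmult_le_pos; [lra|left; apply Rinv_0_lt_compat; lra].
    apply Rmult_lt_reg_r with r'; [lra|]. unfold Rdiv. rewrite Rmult_assoc, Rinv_l by lra. unfold r'; lra. }
  assert (Erq : r = q * r') by (unfold q; field; lra).
  destruct (Hc r' 0 ltac:(lra)) as [[l1 H1] [l2 H2]].
  destruct (terms_small _ _ H1) as [N1 HN1]. destruct (terms_small _ _ H2) as [N2 HN2].
  destruct (pow_lt_1_zero q ltac:(rewrite Rabs_right; lra) (eps * (1 - q) / 2)) as [N3 HN3].
  { apply Rmult_lt_0_compat; [apply Rmult_lt_0_compat|]; lra. }
  exists (Nat.max (Nat.max N1 N2) N3). intros k1 Hk1 p.
  assert (Hterm : forall k, (k >= Nat.max N1 N2)%nat -> rho ar ai k * r ^ n k <= 2 * q ^ k).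
  { intros k Hk. pose proof (HN1 k ltac:(lia)) as A1. pose proof (HN2 k ltac:(lia)) as A2.
    unfold re_term, im_term in A1, A2. rewrite Rmult_0_r, cos_0, sin_0 in A1, A2.
    replace (r' ^ n k * (ar k * 1 - ai k * 0)) with (r' ^ n k * ar k) in A1 by ring.
    replace (r' ^ n k * (ar k * 0 + ai k * 1)) with (r' ^ n k * ai k) in A2 by ring.
    rewrite Rabs_mult, (Rabs_right (r' ^ n k)) in A1, A2 by (apply Rle_ge, pow_le; lra).
    rewrite Erq, Rpow_mult_distr.
    pose proof (rho_le ar ai k). pose proof (rho_nonneg ar ai k).
    pose proof (pow_le q (n k) (proj1 Hq)). pose proof (pow_le r' (n k) ltac:(lra)).
    pose proof (pow_decr q k (n k) ltac:(lra) (Hkn k)).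
    apply Rle_trans with ((Rabs (ar k) + Rabs (ai k)) * (q ^ n k * r' ^ n k)).
    { apply Rmult_le_compat_r; [nra|lra]. }
    nra. }
  apply Rle_trans with (sm (fun i => 2 * q ^ (S k1 + i)%nat) p).
  { apply sm_le; intros i _. apply Hterm. lia. }
  rewrite sm_scal. pose proof (geom q (S k1) p).
  assert (sm (fun i => q ^ (S k1 + i)%nat) p <= q ^ S k1 / (1 - q)).
  { apply Rmult_le_reg_r with (1 - q); [lra|]. rewrite H. unfold Rdiv. rewrite Rmult_assoc, Rinv_l by lra.
    pose proof (pow_le q (S k1 + p)%nat (proj1 Hq)). lra. }
  pose proof (HN3 (S k1) ltac:(lia)). rewrite Rabs_right in H3 by (apply Rle_ge, pow_le; lra).
  apply Rle_trans with (2 * (q ^ S k1 / (1 - q))); [lra|].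
  apply Rmult_le_reg_r with ((1 - q) / 2); [lra|].
  replace (2 * (q ^ S k1 / (1 - q)) * ((1 - q) / 2)) with (q ^ S k1) by (field; lra).
  replace (eps * ((1 - q) / 2)) with (eps * (1 - q) / 2) by (field; lra). lra.
Qed.


Definition FSg (f : nat -> R) (F : list nat) := fold_right (fun k acc => f k + acc) 0 F.

Lemma FSg_scal c f F : FSg (fun k => c * f k) F = c * FSg f F.
Proof. induction F; simpl; [ring|]. rewrite IHF. ring. Qed.

Lemma sm_delta f t N : (t < N)%nat -> sm (fun k => if Nat.eq_dec k t then f k else 0) N = f t.
Proof.
  induction N; intros H; [lia|]. simpl. destruct (Nat.eq_dec N t).
  - subst. rewrite sm_zero; [lra|]. intros j Hj. destruct (Nat.eq_dec j t); [lia|auto].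
  - rewrite IHN by lia. lra.
Qed.

Lemma sm_ind f F N : NoDup F -> (forall k, In k F -> (k < N)%nat) ->
  sm (fun k => if in_dec Nat.eq_dec k F then f k else 0) N = FSg f F.
Proof.
  induction F as [|t F IH]; intros HD HF; simpl.
  - apply sm_zero; auto.
  - inversion HD; subst.
    rewrite (sm_ext _ (fun k => (if Nat.eq_dec k t then f k else 0) + (if in_dec Nat.eq_dec k F then f k else 0))).
    + rewrite sm_plus, sm_delta, IH; auto. intros; apply HF; simpl; auto. apply HF; simpl; auto.
    + intros j _.
      destruct (in_dec Nat.eq_dec j (t :: F)) as [I|I]; destruct (in_dec Nat.eq_dec j F) as [I'|I'];
      destruct (Nat.eq_dec j t) as [E|E]; subst; try contradiction; try lra.
      all: try (exfalso; apply I; simpl; auto; fail); try (destruct I; [congruence|contradiction]).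
      all: repeat match goal with |- context[Nat.eq_dec ?a ?b] => destruct (Nat.eq_dec a b) end; subst; try congruence; try contradiction; lra.
Qed.

Lemma Lac_nodup n Q F : Lac n Q F -> 3 < Q -> (forall k, (0 < n k)%nat) -> NoDup F.
Proof.
  induction F as [|t F IH]; intros HL HQ Hn; constructor.
  - intro HI. pose proof (LacB _ _ _ _ HL HQ (Hn t)). pose proof (In_Bn n F t HI). lia.
  - apply IH; auto. apply HL.
Qed.

Lemma Core n ar ai (v : R -> R) K Q r F :
  converges_in_disk n ar ai -> (forall k, (0 < n k)%nat) -> (forall k, (k <= n k)%nat) ->
  (forall i k, (i <= k)%nat -> (n i <= n k)%nat) ->
  (forall i k, i <> k -> INR (n i) < (Q - 1) * Rabs (INR (n k) - INR (n i))) ->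
  3 < Q ->
  (forall r th l, 0 <= r < 1 -> u_value n ar ai r th l -> l <= K * v r) ->
  0 <= r < 1 -> Lac n Q F ->
  FSg (fun k => rho ar ai k * r ^ n k) F <= 2 * (K * v r).
Proof.
  intros Hc Hn Hkn Hmono Hsep HQ Hkv Hr HL.
  set (C := K * v r). set (S0 := FSg (fun k => rho ar ai k * r ^ n k) F).
  assert (Main : forall eps, eps > 0 -> S0 / 2 <= C + eps).
  { intros eps He.
    destruct (abs_tail n ar ai r eps Hc Hkn Hr He) as [k0' Hk0'].
    set (k0 := Nat.max k0' (Bn n F)).
    set (M := (n k0 + Bn n F + 1)%nat).
    assert (HM : (0 < INR M)) by (apply lt_0_INR; unfold M; lia).
    set (H := fun t => sum_f_R0 (re_term n ar ai r t) k0).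
    assert (HH : forall j, H (th M j) <= C + eps).
    { intro j. destruct (Hc r (th M j) Hr) as [[l Hl] _].
      pose proof (Hkv r (th M j) l Hr Hl).
      assert (Rabs (l - H (th M j)) <= eps).
      { apply limit_close; auto. intro p.
        eapply Rle_trans; [apply sm_abs|].
        eapply Rle_trans; [|apply (Hk0' k0) ; unfold k0; lia].
        apply sm_le; intros i _. apply re_bound. lra. }
      unfold C. pose proof (Rle_abs (H (th M j) - l)). rewrite Rabs_minus_sym in H2. lra. }
    assert (E1 : G M (fun t => PF n ar ai F t * H t) = INR M / 2 * S0).
    { unfold G, H. rewrite (sm_ext _ (fun j => sm (fun k => PF n ar ai F (th M j) * re_term n ar ai r (th M j) k) (S k0))).
      2:{ intros j _. rewrite sum_sm, <- sm_scal. reflexivity. }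
      rewrite sm_swap.
      rewrite (sm_ext _ (fun k => if in_dec Nat.eq_dec k F then INR M / 2 * (rho ar ai k * r ^ n k) else 0)).
      - rewrite (sm_ind (fun k => INR M / 2 * (rho ar ai k * r ^ n k))).
        + unfold S0. apply FSg_scal.
        + apply (Lac_nodup n Q); auto.
        + intros k Hk. pose proof (In_Bn n F k Hk). pose proof (Hkn k). unfold k0. lia.
      - intros k Hk.
        change (sm (fun j => PF n ar ai F (th M j) * re_term n ar ai r (th M j) k) M)
          with (G M (fun t => PF n ar ai F t * re_term n ar ai r t k)).
        rewrite (G_ext _ _ (fun t => PF n ar ai F t * T (Z.of_nat (n k)) (r ^ n k * ar k) (r ^ n k * ai k) t))
          by (intros; rewrite re_T; auto).
        pose proof (Hmono k k0 ltac:(lia)).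
        destruct (in_dec Nat.eq_dec k F) as [I|I].
        + rewrite (R3 n ar ai Q M F HL HQ Hn k I) by (unfold M; lia).
          rewrite val_rho. ring.
        + apply R1; [unfold M; lia|].
          intro HS. destruct (SpecI n Q F _ HL ltac:(lra) HS) as [i [Hi1 Hi2]].
          { pose proof (Hn k); lia. }
          assert (i <> k) by (intro; subst; contradiction).
          pose proof (Hsep i k H1). rewrite Z.abs_eq, <- INR_IZR_INZ in Hi2 by lia. lra. }
    assert (E2 : G M (fun t => PF n ar ai F t * H t) <= (C + eps) * INR M).
    { apply Rle_trans with (G M (fun t => PF n ar ai F t * T 0 (C + eps) 0 t)).
      - unfold G. apply sm_le; intros j _. rewrite T_zero.
        apply Rmult_le_compat_l; [apply PF_nonneg|auto].
      - rewrite (R2 n ar ai Q); auto; [lra|unfold M; lia]. }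
    rewrite E1 in E2. apply Rmult_le_reg_l with (INR M); [lra|]. lra. }
  destruct (Rle_dec S0 (2 * C)); auto. exfalso.
  pose proof (Main ((S0 / 2 - C) / 2) ltac:(lra)). lra.
Qed.


Lemma bern x m : -1 <= x -> 1 + INR m * x <= (1 + x) ^ m.
Proof.
  intros Hx. induction m; [simpl; lra|]. rewrite S_INR. change ((1 + x) ^ S m) with ((1 + x) * (1 + x) ^ m).
  assert ((1 + x) * (1 + INR m * x) <= (1 + x) * (1 + x) ^ m) by (apply Rmult_le_compat_l; lra).
  pose proof (pos_INR m). nra.
Qed.

Lemma seq_facts (n : nat -> nat) lam : 1 < lam -> (forall k, (0 < n k)%nat) ->
  (forall k, INR (n (S k)) >= lam * INR (n k)) ->
  (forall k, (n k < n (S k))%nat) /\ (forall i k, (i <= k)%nat -> (n i <= n k)%nat) /\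
  (forall k, (k <= n k)%nat) /\ (forall i j, INR (n (i + j)%nat) >= lam ^ j * INR (n i)) /\
  (forall i k, (i < k)%nat -> INR (n k) >= lam * INR (n i)).
Proof.
  intros Hl Hn Hs.
  assert (H1 : forall k, (n k < n (S k))%nat).
  { intro k. apply INR_lt. pose proof (Hs k). assert (0 < INR (n k)) by (apply lt_0_INR; auto). nra. }
  assert (H2 : forall i k, (i <= k)%nat -> (n i <= n k)%nat).
  { intros i k Hik. induction Hik; auto. pose proof (H1 m). lia. }
  assert (H3 : forall k, (k <= n k)%nat).
  { induction k; [lia|]. pose proof (H1 k). lia. }
  assert (H4 : forall i j, INR (n (i + j)%nat) >= lam ^ j * INR (n i)).
  { intros i j. induction j; simpl. rewrite Nat.add_0_r; lra.
    rewrite Nat.add_succ_r. pose proof (Hs (i + j)%nat). pose proof (pos_INR (n i)).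
    pose proof (pow_le lam j ltac:(lra)). nra. }
  split; auto. split; auto. split; auto. split; auto.
  intros i k Hik. pose proof (H2 (S i) k Hik). apply le_INR in H. pose proof (Hs i). lra.
Qed.

Fixpoint CL (c s I : nat) : list nat :=
  match I with O => c :: nil | S I' => (c + s * I)%nat :: CL c s I' end.

Lemma CL_FS f c s I : FSg f (CL c s I) = sm (fun i => f (c + s * i)%nat) (S I).
Proof.
  induction I; simpl. rewrite Nat.mul_0_r, Nat.add_0_r. ring.
  simpl in IHI. rewrite IHI. ring.
Qed.

Lemma CL_Lac n Q c s I : 1 < Q -> (forall k, INR (n (k + s)%nat) >= Q * INR (n k)) ->
  Lac n Q (CL c s I) /\ INR (Bn n (CL c s I)) * (Q - 1) <= Q * INR (n (c + s * I)%nat).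
Proof.
  intros HQ Hs. induction I.
  - simpl. rewrite Nat.mul_0_r, !Nat.add_0_r. pose proof (pos_INR (n c)). split; [split; [exact I|simpl; lra]|nra].
  - destruct IHI as [IH1 IH2]. simpl CL. simpl Bn.
    pose proof (Hs (c + s * I)%nat). replace (c + s * I + s)%nat with (c + s * S I)%nat in H by lia.
    split; [split; auto; lra|]. rewrite plus_INR. pose proof (pos_INR (n (c + s * S I)%nat)). nra.
Qed.

Lemma sm_blocks f s m : sm f (s * m) = sm (fun c => sm (fun i => f (c + s * i)%nat) m) s.
Proof.
  induction m.
  - rewrite Nat.mul_0_r. simpl. symmetry. apply sm_zero. auto.
  - replace (s * S m)%nat with (s * m + s)%nat by lia. rewrite sm_add, IHm.
    simpl. rewrite sm_plus. f_equal. apply sm_ext; intros. f_equal. lia.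
Qed.

Lemma forward v D lam n ar ai :
  standing v -> doubling v D -> 1 < lam -> (forall k, (0 < n k)%nat) ->
  (forall k, INR (n (S k)) >= lam * INR (n k)) -> converges_in_disk n ar ai ->
  in_kv v n ar ai ->
  exists gamma, gamma > 0 /\ forall N : nat, (1 <= N)%nat -> coef_sum n ar ai N <= gamma * g v (INR N).
Proof.
  intros Hv Hd Hl Hn Hs Hc [K [HK Hkv]].
  destruct (seq_facts n lam Hl Hn Hs) as [_ [Hmono [Hkn [Hgrow Hgap]]]].
  set (Q := 4 + lam / (lam - 1)).
  assert (HQ : 3 < Q) by (unfold Q; assert (0 < lam / (lam - 1)) by (apply Rdiv_lt_0_compat; lra); lra).
  assert (HQa : (Q - 1) * (lam - 1) = 3 * (lam - 1) + lam) by (unfold Q; field; lra).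
  assert (Hsep : forall i k, i <> k -> INR (n i) < (Q - 1) * Rabs (INR (n k) - INR (n i))).
  { intros i k Hik. assert (0 < INR (n i)) by (apply lt_0_INR; auto).
    destruct (Nat.lt_gt_cases i k) as [[Hlt|Hgt] _]; [lia| |].
    - pose proof (Hgap i k Hlt). rewrite Rabs_right by nra.
      assert ((lam - 1) * INR (n i) <= INR (n k) - INR (n i)) by lra.
      assert ((Q - 1) * ((lam - 1) * INR (n i)) <= (Q - 1) * (INR (n k) - INR (n i))) by (apply Rmult_le_compat_l; lra).
      rewrite <- Rmult_assoc, HQa in H2. nra.
    - pose proof (Hgap k i Hgt). assert (0 <= INR (n k)) by apply pos_INR.
      rewrite Rabs_left1 by nra.
      apply Rmult_lt_reg_l with lam; [lra|].
      assert ((lam - 1) * INR (n i) <= lam * (- (INR (n k) - INR (n i)))) by nra.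
      assert ((Q - 1) * ((lam - 1) * INR (n i)) <= (Q - 1) * (lam * (- (INR (n k) - INR (n i))))) by (apply Rmult_le_compat_l; lra).
      rewrite <- Rmult_assoc, HQa in H3.
      replace (lam * ((Q - 1) * - (INR (n k) - INR (n i)))) with ((Q - 1) * (lam * - (INR (n k) - INR (n i)))) by ring.
      nra. }
  destruct (INR_unbounded (Q / (lam - 1))) as [s0 Hs0].
  set (s := S s0).
  assert (Hls : Q <= lam ^ s).
  { pose proof (bern (lam - 1) s ltac:(lra)). replace (1 + (lam - 1)) with lam in H by ring.
    unfold s in *. rewrite S_INR in H. apply Rmult_lt_compat_r with (r := lam - 1) in Hs0; [|lra].
    unfold Rdiv in Hs0. rewrite Rmult_assoc, Rinv_l in Hs0 by lra. nra. }
  assert (HsQ : forall k, INR (n (k + s)%nat) >= Q * INR (n k)).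
  { intro k. pose proof (Hgrow k s). pose proof (pos_INR (n k)). nra. }
  destruct Hd as [HD1 HD2].
  exists (4 * INR s * K * D). split.
  { assert (0 < INR s) by (apply lt_0_INR; unfold s; lia). apply Rmult_lt_0_compat; [|lra]. nra. }
  intros N HN.
  assert (HN' : 1 <= INR N) by (apply (le_INR 1); auto).
  set (r := 1 - / (2 * INR N)).
  assert (Hr : 0 <= r < 1).
  { unfold r. assert (0 < / (2 * INR N) <= / 2).
    { split. apply Rinv_0_lt_compat; lra. apply Rinv_le_contravar; lra. } lra. }
  assert (Hcls : forall c, sm (fun i => rho ar ai (c + s * i)%nat * r ^ n (c + s * i)%nat) (S N) <= 2 * (K * v r)).
  { intro c. rewrite <- (CL_FS (fun k => rho ar ai k * r ^ n k)).
    apply (Core n ar ai v K Q r); auto. apply (CL_Lac n Q c s N); auto; lra. }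
  assert (Htot : sm (fun k => rho ar ai k * r ^ n k) (s * S N) <= INR s * (2 * (K * v r))).
  { rewrite sm_blocks. rewrite <- sm_const. apply sm_le. intros; apply Hcls. }
  assert (Hrn : / 2 <= r ^ N).
  { pose proof (bern (- / (2 * INR N)) N). unfold r.
    replace (1 - / (2 * INR N)) with (1 + - / (2 * INR N)) by ring.
    replace (INR N * - / (2 * INR N)) with (- / 2) in H by (field; lra).
    assert (/ (2 * INR N) <= 1) by (rewrite <- Rinv_1; apply Rinv_le_contravar; lra). lra. }
  assert (Hcoef : coef_sum n ar ai N <= 2 * sm (fun k => rho ar ai k * r ^ n k) (s * S N)).
  { unfold coef_sum. rewrite sum_sm. rewrite <- sm_scal.
    apply Rle_trans with (sm (fun k => 2 * (rho ar ai k * r ^ n k)) (S N)).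
    - apply sm_le. intros k _. pose proof (rho_nonneg ar ai k).
      destruct (Nat.leb_spec (n k) N) as [Hle|Hgt].
      + pose proof (pow_decr r (n k) N ltac:(lra) Hle). fold (rho ar ai k). nra.
      + pose proof (pow_le r (n k) (proj1 Hr)). nra.
    - apply sm_mono. intros. pose proof (rho_nonneg ar ai i). pose proof (pow_le r (n i) (proj1 Hr)). nra.
      unfold s. lia. }
  assert (Hvr : v r <= D * g v (INR N)).
  { unfold r, g. pose proof (HD2 (/ (2 * INR N))).
    replace (1 - 2 * / (2 * INR N)) with (1 - / INR N) in H by (field; lra). apply H.
    split. apply Rinv_0_lt_compat; lra. apply Rinv_le_contravar; lra. }
  assert (0 <= INR s) by apply pos_INR.
  assert (0 <= K * v r <= K * (D * g v (INR N))) by (destruct Hv as [Hv1 _]; pose proof (Hv1 r Hr); split; [nra|apply Rmult_le_compat_l; lra]).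
  apply Rle_trans with (2 * (INR s * (2 * (K * v r)))); [lra|].
  replace (4 * INR s * K * D * g v (INR N)) with (2 * (INR s * (2 * (K * (D * g v (INR N)))))) by ring.
  apply Rmult_le_compat_l; [lra|]. apply Rmult_le_compat_l; [lra|]. lra.
Qed.


Definition w (j : nat) : R := match j with O => 1 | S j' => (/2) ^ (2 ^ j') end.

Lemma w_nonneg j : 0 <= w j.
Proof. destruct j; simpl; [lra|]. apply pow_le; lra. Qed.

Lemma pow2_ge j : (S j <= 2 ^ j)%nat.
Proof. induction j; simpl; lia. Qed.

Lemma sm_geom_bound b J0 : (forall j, 0 <= b j) -> (forall j, (j >= J0)%nat -> b (S j) <= b j / 2) ->
  forall J, sm b J <= sm b J0 + 2 * b J0.
Proof.
  intros Hb Hr J.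
  assert (Hp : forall p, sm (fun i => b (J0 + i)%nat) p + 2 * b (J0 + p)%nat <= 2 * b J0).
  { induction p; simpl. rewrite Nat.add_0_r; lra.
    rewrite Nat.add_succ_r. pose proof (Hr (J0 + p)%nat ltac:(lia)). lra. }
  destruct (le_lt_dec J J0).
  - pose proof (sm_mono b J J0 Hb l). pose proof (Hb J0). lra.
  - replace J with (J0 + (J - J0))%nat by lia. rewrite sm_add.
    pose proof (Hp (J - J0)%nat). pose proof (Hb (J0 + (J - J0))%nat). lra.
Qed.

Lemma bconst D : 1 <= D -> exists C, 0 < C /\ forall J, sm (fun j => D ^ S j * w j) J <= C.
Proof.
  intros HD.
  destruct (pow_lt_1_zero (/2) ltac:(rewrite Rabs_right; lra) (/ (2 * D))) as [N HN].
  { apply Rinv_0_lt_compat; lra. }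
  set (J0 := S N). set (b := fun j => D ^ S j * w j).
  assert (Hb : forall j, 0 <= b j) by (intro; unfold b; apply Rmult_le_pos; [apply pow_le; lra|apply w_nonneg]).
  exists (sm b J0 + 2 * b J0 + 1). split.
  { pose proof (sm_nonneg b J0 Hb). pose proof (Hb J0). lra. }
  intro J. pose proof (sm_geom_bound b J0 Hb). cut (sm b J <= sm b J0 + 2 * b J0); [lra|].
  apply H. intros j Hj. unfold b. destruct j; [unfold J0 in Hj; lia|].
  change (w (S (S j))) with ((/2) ^ (2 ^ S j)). change (w (S j)) with ((/2) ^ (2 ^ j)).
  replace (2 ^ S j)%nat with (2 ^ j + 2 ^ j)%nat by (simpl; lia). rewrite pow_add.
  assert (Hw : (/2) ^ (2 ^ j) <= / (2 * D)).
  { pose proof (HN (2 ^ j)%nat ltac:(pose proof (pow2_ge j); unfold J0 in Hj; lia)).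
    rewrite Rabs_right in H0 by (apply Rle_ge, pow_le; lra). lra. }
  assert (0 <= (/2) ^ (2 ^ j)) by (apply pow_le; lra).
  change (D ^ S (S (S j))) with (D * D ^ S (S j)).
  assert (HDD : D * / (2 * D) = / 2) by (field; lra).
  assert (0 <= D ^ S (S j)) by (apply pow_le; lra).
  assert (D * (/2) ^ (2 ^ j) <= / 2) by (rewrite <- HDD at 2; apply Rmult_le_compat_l; lra).
  set (a := D ^ S (S j)) in *. set (x := (/2) ^ (2 ^ j)) in *.
  assert (0 <= a * x * (/ 2 - D * x)) by (apply Rmult_le_pos; [apply Rmult_le_pos|]; lra).
  unfold Rdiv. nra.
Qed.

Lemma half_pow m : (1 <= m)%nat -> (1 - / INR m) ^ m <= / 2.
Proof.
  intros Hm. assert (HmR : 1 <= INR m) by (apply (le_INR 1); auto).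
  assert (0 < / INR m <= 1) by (split; [apply Rinv_0_lt_compat; lra|rewrite <- Rinv_1; apply Rinv_le_contravar; lra]).
  pose proof (bern (/ INR m) m ltac:(lra)). rewrite Rinv_r in H0 by lra.
  assert (Hp : (1 - / INR m) ^ m * (1 + / INR m) ^ m <= 1).
  { rewrite <- Rpow_mult_distr. apply Rle_trans with (1 ^ m); [apply pow_incr; nra|rewrite pow1; lra]. }
  assert (0 <= (1 - / INR m) ^ m) by (apply pow_le; lra).
  nra.
Qed.

Lemma lim_le u l B : Un_cv u l -> (forall m, u m <= B) -> l <= B.
Proof.
  intros Hu Hb. destruct (Rle_dec l B); auto. exfalso.
  destruct (Hu (l - B)) as [N HN]; [lra|]. pose proof (HN N (le_n N)). pose proof (Hb N).
  unfold Rdist in H. pose proof (Rle_abs (l - u N)). rewrite Rabs_minus_sym in H. lra.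
Qed.

Lemma vmono v x y : standing v -> 0 <= x -> x <= y -> y < 1 -> v x <= v y.
Proof.
  intros [_ [Hv _]] Hx Hxy Hy. destruct (Req_dec x y); [subst; lra|]. left; apply Hv; lra.
Qed.

Lemma sm_single f j L : (forall i, 0 <= f i) -> (j < L)%nat -> f j <= sm f L.
Proof.
  intros Hf Hj. pose proof (sm_mono f (S j) L Hf Hj). simpl in H. pose proof (sm_nonneg f j Hf). lra.
Qed.

Lemma block_exists N0 : forall J x, (x <= 2 ^ S J * N0)%nat ->
  exists j, (j <= J)%nat /\ (x <= 2 ^ S j * N0)%nat /\ (j = O \/ (2 ^ j * N0 < x)%nat).
Proof.
  induction J; intros x Hx.
  - exists O. split; [lia|]. split; auto.
  - destruct (le_lt_dec x (2 ^ S J * N0)) as [Hle|Hlt].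
    + destruct (IHJ x Hle) as [j [Hj1 [Hj2 Hj3]]]. exists j; split; [lia|auto].
    + exists (S J). split; [lia|]. split; auto.
Qed.

Lemma backward v D lam n ar ai :
  standing v -> doubling v D -> 1 < lam -> (forall k, (0 < n k)%nat) ->
  (forall k, INR (n (S k)) >= lam * INR (n k)) -> converges_in_disk n ar ai ->
  (exists gamma, gamma > 0 /\ forall N : nat, (1 <= N)%nat -> coef_sum n ar ai N <= gamma * g v (INR N)) ->
  in_kv v n ar ai.
Proof.
  intros Hv Hd Hl Hn Hs Hc [gam [Hgam Hcoef]].
  destruct (seq_facts n lam Hl Hn Hs) as [Hstr [Hmono _]].
  assert (Hklt : forall k, (k < n k)%nat).
  { induction k; [apply Hn|]. pose proof (Hstr k). lia. }
  destruct Hd as [HD1 HD2].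
  destruct (bconst D HD1) as [C [HC HCb]].
  exists (gam * C). split; [apply Rmult_lt_0_compat; lra|].
  intros r t l Hr Hl0.
  assert (Hvr : 1 <= v r) by (apply (proj1 Hv); auto).
  set (R0 := / (1 - r)).
  assert (HR0 : 1 <= R0) by (unfold R0; rewrite <- Rinv_1; apply Rinv_le_contravar; lra).
  destruct (archimed R0) as [Hu1 Hu2].
  assert (Hz : (1 < up R0)%Z) by (apply lt_IZR; lra).
  set (N0 := Z.to_nat (up R0 - 1)).
  assert (EN0 : INR N0 = IZR (up R0) - 1) by (unfold N0; rewrite INR_IZR_INZ, Z2Nat.id by lia; rewrite minus_IZR; auto).
  assert (HN0 : (1 <= N0)%nat) by (unfold N0; lia).
  assert (HN0R : 1 <= INR N0) by (apply (le_INR 1); auto).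
  assert (F1 : g v (INR N0) <= v r).
  { unfold g. apply vmono; auto.
    - assert (/ INR N0 <= 1) by (rewrite <- Rinv_1; apply Rinv_le_contravar; lra). lra.
    - assert (/ R0 <= / INR N0) by (apply Rinv_le_contravar; lra).
      unfold R0 in H. rewrite Rinv_inv in H. lra.
    - lra. }
  assert (F2 : forall j, g v (INR (2 ^ j * N0)) <= D ^ j * g v (INR N0)).
  { induction j.
    - simpl. rewrite Nat.add_0_r. lra.
    - assert (Hx : 1 <= INR (2 ^ j * N0)).
      { apply (le_INR 1). pose proof (pow2_ge j). nia. }
      replace (INR (2 ^ S j * N0)) with (2 * INR (2 ^ j * N0)) by (rewrite <- (mult_INR 2); f_equal; simpl; lia).
      unfold g in *. pose proof (HD2 (/ (2 * INR (2 ^ j * N0)))).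
      replace (1 - 2 * / (2 * INR (2 ^ j * N0))) with (1 - / INR (2 ^ j * N0)) in H by (field; lra).
      assert (v (1 - / (2 * INR (2 ^ j * N0))) <= D * v (1 - / INR (2 ^ j * N0))).
      { apply H. split. apply Rinv_0_lt_compat; lra. apply Rinv_le_contravar; lra. }
      change (D ^ S j) with (D * D ^ j).
      assert (0 <= D) by lra. nra. }
  assert (F3 : r ^ (2 * N0) <= / 2).
  { assert (Hr1 : r <= 1 - / INR (N0 + 1)).
    { rewrite plus_INR. simpl (INR 1).
      assert (/ (INR N0 + 1) < / R0) by (apply Rinv_lt_contravar; nra).
      unfold R0 in H; rewrite Rinv_inv in H. lra. }
    pose proof (half_pow (N0 + 1) ltac:(lia)).
    assert (r ^ (N0 + 1) <= (1 - / INR (N0 + 1)) ^ (N0 + 1)) by (apply pow_incr; lra).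
    pose proof (pow_decr r (N0 + 1) (2 * N0) ltac:(lra) ltac:(lia)). lra. }
  assert (F4 : forall k j, (j = O \/ (2 ^ j * N0 < n k)%nat) -> r ^ n k <= w j).
  { intros k j [E|E].
    - subst. simpl. apply Rle_trans with (1 ^ n k); [apply pow_incr; lra|rewrite pow1; lra].
    - destruct j as [|j']; [simpl; apply Rle_trans with (1 ^ n k); [apply pow_incr; lra|rewrite pow1; lra]|].
      simpl w. apply Rle_trans with (r ^ (2 ^ S j' * N0)).
      + apply pow_decr; [lra|lia].
      + replace (2 ^ S j' * N0)%nat with (2 * N0 * 2 ^ j')%nat by (simpl; lia).
        rewrite pow_mult. apply pow_incr. split; [apply pow_le; lra|auto]. }
  apply (lim_le _ _ _ Hl0). intro m.
  apply Rle_trans with (sm (fun k => rho ar ai k * r ^ n k) (S m)).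
  { rewrite sum_sm. apply sm_le. intros k _. eapply Rle_trans; [apply Rle_abs|]. apply re_bound; lra. }
  set (L := S (n m)).
  set (ind := fun (N k : nat) => if Nat.leb (n k) N then 1 else 0).
  assert (Hind : forall N k, 0 <= ind N k) by (intros; unfold ind; destruct (Nat.leb (n k) N); lra).
  apply Rle_trans with (sm (fun k => rho ar ai k * sm (fun j => w j * ind (2 ^ S j * N0)%nat k) L) (S m)).
  { apply sm_le. intros k Hk. apply Rmult_le_compat_l; [apply rho_nonneg|].
    assert (Hb : (n k <= 2 ^ S (n m) * N0)%nat).
    { pose proof (Hmono k m ltac:(lia)). pose proof (pow2_ge (S (n m))). nia. }
    destruct (block_exists N0 (n m) (n k) Hb) as [j [Hj1 [Hj2 Hj3]]].
    apply Rle_trans with (w j * ind (2 ^ S j * N0)%nat k).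
    - unfold ind. destruct (Nat.leb_spec (n k) (2 ^ S j * N0)); [|lia]. rewrite Rmult_1_r. auto.
    - apply (sm_single (fun j => w j * ind (2 ^ S j * N0)%nat k)).
      + intros; apply Rmult_le_pos; [apply w_nonneg|auto].
      + unfold L; lia. }
  rewrite (sm_ext _ (fun k => sm (fun j => w j * (rho ar ai k * ind (2 ^ S j * N0)%nat k)) L))
    by (intros; rewrite <- sm_scal; apply sm_ext; intros; ring).
  rewrite sm_swap.
  apply Rle_trans with (sm (fun j => w j * (gam * (D ^ S j * v r))) L).
  { apply sm_le. intros j _. rewrite sm_scal. apply Rmult_le_compat_l; [apply w_nonneg|].
    apply Rle_trans with (coef_sum n ar ai (2 ^ S j * N0)).
    - set (NN := (2 ^ S j * N0)%nat).
      unfold coef_sum. rewrite sum_sm.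
      set (f := fun k => if Nat.leb (n k) NN then cmod (ar k) (ai k) else 0).
      assert (Hf : forall k, 0 <= f k).
      { intro k; unfold f; destruct (Nat.leb (n k) NN); [apply rho_nonneg|lra]. }
      rewrite (sm_ext _ f) by (intros i _; unfold f, ind; destruct (Nat.leb (n i) NN); [unfold rho; ring|ring]).
      destruct (le_lt_dec (S m) (S NN)).
      + apply sm_mono; auto.
      + replace (S m) with (S NN + (S m - S NN))%nat by lia. rewrite sm_add.
        rewrite (sm_zero (fun i => f (S NN + i)%nat)); [lra|].
        intros i _. unfold f. pose proof (Hklt (S NN + i)%nat).
        destruct (Nat.leb_spec (n (S NN + i)%nat) NN); [lia|auto].
    - eapply Rle_trans; [apply Hcoef; pose proof (pow2_ge (S j)); nia|].
      apply Rmult_le_compat_l; [lra|]. eapply Rle_trans; [apply F2|].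
      apply Rmult_le_compat_l; [apply pow_le; lra|auto]. }
  rewrite (sm_ext _ (fun j => (gam * v r) * (D ^ S j * w j))) by (intros; ring).
  rewrite sm_scal. pose proof (HCb L). assert (0 <= gam * v r) by nra.
  replace (gam * C * v r) with (gam * v r * C) by ring. apply Rmult_le_compat_l; auto.
Qed.


Theorem theorem2 (v : R -> R) (D : R) (lam : R) (n : nat -> nat) (ar ai : nat -> R) :
  standing v -> doubling v D ->
  1 < lam ->
  (forall k, (0 < n k)%nat) ->
  (forall k, INR (n (S k)) >= lam * INR (n k)) ->
  converges_in_disk n ar ai ->
  (in_kv v n ar ai <->
   exists gamma, gamma > 0 /\
     forall N : nat, (1 <= N)%nat -> coef_sum n ar ai N <= gamma * g v (INR N)).
Proof.
  intros Hv Hd Hl Hn Hs Hc. split.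
  - apply (forward v D lam n ar ai); auto.
  - apply (backward v D lam n ar ai); auto.
Qed.
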